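(* Let $H\in(\tfrac12,1)$, $\beta\in(1-2H,1]$, $\tau=T/M$, $t_i=i\tau$, and fix $m\in\{1,\dots,M\}$. With $R(z)=(1+z)^{-1}$ set $\mathcal T_N(i):=E_N(t_m-t_i)-R(\tau A_N)^{m-i}$ for $i=0,\dots,m-1$. Then there is a constant $C$ independent of $N,M,m$ and $x$ such that for all $x\in V$, $$\sum_{i,j=0}^{m-1}\int_{t_j}^{t_{j+1}}\int_{t_i}^{t_{i+1}}\big\langle\mathcal T_N(i)P_Nx,\;\mathcal T_N(j)P_Nx\big\rangle\,\phi(u-v)\,\mathrm du\,\mathrm dv\le C\,\tau^{2H+\beta-1}\|A_N^{\frac{\beta-1}{2}}P_Nx\|^2 .$$
   Context: $(V,\langle\cdot,\cdot\rangle,\|\cdot\|)$ is a real separable Hilbert space; $A$ is a linear, densely defined, positive self-adjoint unbounded operator with compact inverse, orthonormal eigenbasis $(e_i)$, $Ae_i=\lambda_ie_i$, $0<\lambda_1\le\lambda_2\le\dots\to\infty$. $P_N$ is the orthogonal projection onto $\mathrm{span}\{e_1,\dots,e_N\}$, $A_N=AP_N$ (with fractional powers taken on $\mathrm{span}\{e_1,\dots,e_N\}$), $E_N(t)=e^{-tA_N}$, and $R(\tau A_N)=(I+\tau A_N)^{-1}$. $\phi(y)=H(2H-1)|y|^{2H-2}$. *)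

(* Defs.v *)
From Stdlib Require Import Reals Lra.
Open Scope R_scope.

Record HilbertSpace := {
  hs :> Type;
  hzero : hs;
  hadd : hs -> hs -> hs;
  hopp : hs -> hs;
  hscal : R -> hs -> hs;
  hinner : hs -> hs -> R;
  hadd_assoc : forall x y z, hadd x (hadd y z) = hadd (hadd x y) z;
  hadd_comm : forall x y, hadd x y = hadd y x;
  hadd_zero : forall x, hadd x hzero = x;
  hadd_opp : forall x, hadd x (hopp x) = hzero;
  hscal_one : forall x, hscal 1 x = x;
  hscal_assoc : forall a b x, hscal a (hscal b x) = hscal (a * b) x;
  hscal_distr_v : forall a x y, hscal a (hadd x y) = hadd (hscal a x) (hscal a y);
  hscal_distr_s : forall a b x, hscal (a + b) x = hadd (hscal a x) (hscal b x);
  hinner_sym : forall x y, hinner x y = hinner y x;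
  hinner_add : forall x y z, hinner (hadd x y) z = hinner x z + hinner y z;
  hinner_scal : forall a x y, hinner (hscal a x) y = a * hinner x y;
  hinner_pos : forall x, 0 <= hinner x x;
  hinner_def : forall x, hinner x x = 0 -> x = hzero;
  hcomplete : forall u : nat -> hs,
    (forall eps, eps > 0 -> exists n0, forall p q, (p >= n0)%nat -> (q >= n0)%nat ->
        sqrt (hinner (hadd (u p) (hopp (u q))) (hadd (u p) (hopp (u q)))) < eps) ->
    exists l, forall eps, eps > 0 -> exists n0, forall n, (n >= n0)%nat ->
        sqrt (hinner (hadd (u n) (hopp l)) (hadd (u n) (hopp l))) < eps
}.

Arguments hzero {_}. Arguments hadd {_}. Arguments hopp {_}.
Arguments hscal {_}. Arguments hinner {_}.

Definition hsub {V : HilbertSpace} (x y : V) : V := hadd x (hopp y).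
Definition hnorm {V : HilbertSpace} (x : V) : R := sqrt (hinner x x).

Fixpoint sumR (n : nat) (f : nat -> R) : R :=
  match n with O => 0 | S n' => sumR n' f + f n' end.

Fixpoint vsum {V : HilbertSpace} (n : nat) (f : nat -> V) : V :=
  match n with O => hzero | S n' => hadd (vsum n' f) (f n') end.

(* ---------- Spectral data of A ----------
   e k, lam k (k = 0,1,2,...) stand for e_{k+1}, lambda_{k+1} of the paper. *)

(* functional calculus of A_N on span{e_1..e_N}:
   g(A_N) y = sum_{k<N} g(lambda_k) <y,e_k> e_k *)
Definition funcalc {V : HilbertSpace} (e : nat -> V) (lam : nat -> R)
  (N : nat) (g : R -> R) (y : V) : V :=
  vsum N (fun k => hscal (g (lam k) * hinner y (e k)) (e k)).

Definition PN {V : HilbertSpace} (e : nat -> V) (N : nat) (x : V) : V :=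
  vsum N (fun k => hscal (hinner x (e k)) (e k)).

Definition EN {V : HilbertSpace} e lam N (t : R) (y : V) : V :=
  funcalc e lam N (fun l => exp (- t * l)) y.

Definition RNpow {V : HilbertSpace} e lam N (tau : R) (n : nat) (y : V) : V :=
  funcalc e lam N (fun l => (/ (1 + tau * l)) ^ n) y.

Definition ANpow {V : HilbertSpace} e lam N (s : R) (y : V) : V :=
  funcalc e lam N (fun l => Rpower l s) y.

Definition TN {V : HilbertSpace} e lam N (tau : R) (m i : nat) (y : V) : V :=
  hsub (EN e lam N (INR m * tau - INR i * tau) y) (RNpow e lam N tau (m - i) y).

Definition phi (H y : R) : R := H * (2 * H - 1) * Rpower (Rabs y) (2 * H - 2).

(* continuous truncations phi_n increasing to phi (pointwise, y <> 0) *)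
Definition phi_trunc (H : R) (n : nat) (y : R) : R :=
  H * (2 * H - 1) * Rpower (Rmax (Rabs y) (/ INR (S n))) (2 * H - 2).

Definition RInt_is (f : R -> R) (a b v : R) : Prop :=
  exists pr : Riemann_integrable f a b, RiemannInt pr = v.

(* I = int_c^d int_a^b phi(u - v) du dv, defined (phi >= 0, singular on the
   diagonal) as the monotone limit of the iterated Riemann integrals of the
   continuous truncations phi_n. *)
Definition dbl_int_phi (H a b c d I : R) : Prop :=
  exists J : nat -> R, Un_cv J I /\
    forall n, exists F : R -> R,
      (forall v, RInt_is (fun u => phi_trunc H n (u - v)) a b (F v)) /\
      RInt_is F c d (J n).

(* Main.v *)
Require Import Defs.
From Stdlib Require Import Reals Lra Lia.
From Coquelicot Require Import Coquelicot.
Open Scope R_scope.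

Lemma Rpower_deriv (w q u : R) : 0 < u + w ->
  is_derive (fun x => Rpower (x + w) q) u (q * Rpower (u + w) (q - 1)).
Proof.
  intros Hp.
  apply is_derive_Reals.
  replace (q * Rpower (u + w) (q - 1)) with ((q * Rpower (u + w) (q - 1)) * 1) by ring.
  apply (derivable_pt_lim_comp (fun x => x + w) (fun y => Rpower y q)).
  - replace 1 with (1 + 0) by ring. apply derivable_pt_lim_plus.
    apply derivable_pt_lim_id. apply derivable_pt_lim_const.
  - apply derivable_pt_lim_power; auto.
Qed.

Lemma Rpower_deriv_neg (w q u : R) : 0 < - u + w ->
  is_derive (fun x => Rpower (- x + w) q) u (- (q * Rpower (- u + w) (q - 1))).
Proof.
  intros Hp.
  apply is_derive_Reals.
  replace (- (q * Rpower (- u + w) (q - 1))) with ((q * Rpower (- u + w) (q - 1)) * (-1)) by ring.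
  apply (derivable_pt_lim_comp (fun x => - x + w) (fun y => Rpower y q)).
  - replace (-1) with (-1 + 0) by ring. apply derivable_pt_lim_plus.
    apply derivable_pt_lim_opp. apply derivable_pt_lim_id. apply derivable_pt_lim_const.
  - apply derivable_pt_lim_power; auto.
Qed.

Lemma Rpower_cont (w q u : R) : 0 < u + w -> continuous (fun x => Rpower (x + w) q) u.
Proof.
  intros Hp. apply (ex_derive_continuous (K:=R_AbsRing) (V:=R_NormedModule)). eexists. apply Rpower_deriv; auto.
Qed.

Lemma Rpower_cont_neg (w q u : R) : 0 < - u + w -> continuous (fun x => Rpower (- x + w) q) u.
Proof.
  intros Hp. apply (ex_derive_continuous (K:=R_AbsRing) (V:=R_NormedModule)). eexists. apply Rpower_deriv_neg; auto.
Qed.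

Lemma L1 (w q a b : R) : 0 < q -> 0 < a + w -> a <= b ->
  is_RInt (fun u => Rpower (u + w) (q - 1)) a b ((Rpower (b + w) q - Rpower (a + w) q) / q).
Proof.
  intros Hq Ha Hab.
  assert (H := is_RInt_derive (fun x => / q * Rpower (x + w) q) (fun u => Rpower (u + w) (q - 1)) a b).
  replace ((Rpower (b + w) q - Rpower (a + w) q) / q) with
     (minus (/ q * Rpower (b + w) q) (/ q * Rpower (a + w) q)).
  2:{ unfold minus, plus, opp; simpl. field. lra. }
  apply H.
  - intros x Hx. rewrite Rmin_left in Hx by lra. rewrite Rmax_right in Hx by lra.
    replace (Rpower (x + w) (q - 1)) with (/ q * (q * Rpower (x + w) (q - 1))) by (field; lra).
    apply (is_derive_scal (fun x => Rpower (x + w) q)). apply Rpower_deriv. lra.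
  - intros x Hx. rewrite Rmin_left in Hx by lra. rewrite Rmax_right in Hx by lra.
    apply Rpower_cont. lra.
Qed.

Lemma L2 (w q a b : R) : 0 < q -> 0 < - b + w -> a <= b ->
  is_RInt (fun u => Rpower (- u + w) (q - 1)) a b ((Rpower (- a + w) q - Rpower (- b + w) q) / q).
Proof.
  intros Hq Ha Hab.
  assert (H := is_RInt_derive (fun x => - / q * Rpower (- x + w) q) (fun u => Rpower (- u + w) (q - 1)) a b).
  replace ((Rpower (- a + w) q - Rpower (- b + w) q) / q) with
     (minus (- / q * Rpower (- b + w) q) (- / q * Rpower (- a + w) q)).
  2:{ unfold minus, plus, opp; simpl. field. lra. }
  apply H.
  - intros x Hx. rewrite Rmin_left in Hx by lra. rewrite Rmax_right in Hx by lra.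
    replace (Rpower (- x + w) (q - 1)) with (- / q * (- (q * Rpower (- x + w) (q - 1)))) by (field; lra).
    apply (is_derive_scal (fun x => Rpower (- x + w) q)). apply Rpower_deriv_neg. lra.
  - intros x Hx. rewrite Rmin_left in Hx by lra. rewrite Rmax_right in Hx by lra.
    apply Rpower_cont_neg. lra.
Qed.

Lemma exp_le (x y : R) : x <= y -> exp x <= exp y.
Proof. intros [H|H]. left; apply exp_increasing; auto. subst; lra. Qed.

Lemma Rpower_pos (x y : R) : 0 < Rpower x y.
Proof. unfold Rpower; apply exp_pos. Qed.

Lemma Rpower_ge_self (t q : R) : 0 < t <= 1 -> q <= 1 -> t <= Rpower t q.
Proof.
  intros [Ht1 Ht2] Hq. unfold Rpower.
  rewrite <- (exp_ln t) at 1 by lra. apply exp_le.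
  assert (ln t <= 0) by (rewrite <- ln_1; apply ln_le; lra). nra.
Qed.

Lemma Rpower_subadd (X L q : R) : 0 < X -> 0 < L -> q <= 1 ->
  Rpower (X + L) q <= Rpower X q + Rpower L q.
Proof.
  intros HX HL Hq.
  assert (E1 : Rpower X q = Rpower (X / (X + L)) q * Rpower (X + L) q).
  { rewrite Rpower_mult_distr. f_equal. field. lra. apply Rdiv_lt_0_compat; lra. lra. }
  assert (E2 : Rpower L q = Rpower (L / (X + L)) q * Rpower (X + L) q).
  { rewrite Rpower_mult_distr. f_equal. field. lra. apply Rdiv_lt_0_compat; lra. lra. }
  assert (A1 : X / (X + L) <= Rpower (X / (X + L)) q).
  { apply Rpower_ge_self; auto. split. apply Rdiv_lt_0_compat; lra.
    apply Rmult_le_reg_r with (X + L). lra. field_simplify; lra. }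
  assert (A2 : L / (X + L) <= Rpower (L / (X + L)) q).
  { apply Rpower_ge_self; auto. split. apply Rdiv_lt_0_compat; lra.
    apply Rmult_le_reg_r with (X + L). lra. field_simplify; lra. }
  rewrite E1, E2.
  assert (P := Rpower_pos (X + L) q).
  assert (X / (X + L) + L / (X + L) = 1) by (field; lra).
  nra.
Qed.

Lemma Rpower_decr_base (x y p : R) : p <= 0 -> 0 < x <= y -> Rpower y p <= Rpower x p.
Proof.
  intros Hp [Hx Hxy]. unfold Rpower. apply exp_le.
  assert (ln x <= ln y) by (apply ln_le; lra). nra.
Qed.

Lemma g_int (v e q a b : R) : 0 < e -> 0 < q <= 1 -> a < b ->
  exists val, is_RInt (fun u => Rpower (Rabs (u - v) + e) (q - 1)) a b val /\
     val <= 2 * Rpower (b - a) q / q.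
Proof.
  intros He Hq Hab.
  assert (Pba := Rpower_pos (b - a) q).
  destruct (Rle_lt_dec v a) as [Hva|Hva].
  - exists ((Rpower (b + (e - v)) q - Rpower (a + (e - v)) q) / q). split.
    + apply is_RInt_ext with (fun u => Rpower (u + (e - v)) (q - 1)).
      { intros x Hx. rewrite Rmin_left in Hx by lra. rewrite Rmax_right in Hx by lra.
        rewrite Rabs_right by lra. f_equal. ring. }
      apply L1; lra.
    + replace (b + (e - v)) with ((a + (e - v)) + (b - a)) by ring.
      assert (S := Rpower_subadd (a + (e - v)) (b - a) q ltac:(lra) ltac:(lra) ltac:(lra)).
      apply Rmult_le_reg_r with q. lra. field_simplify; try lra.
  - destruct (Rle_lt_dec b v) as [Hvb|Hvb].
    + exists ((Rpower (- a + (v + e)) q - Rpower (- b + (v + e)) q) / q). split.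
      * apply is_RInt_ext with (fun u => Rpower (- u + (v + e)) (q - 1)).
        { intros x Hx. rewrite Rmin_left in Hx by lra. rewrite Rmax_right in Hx by lra.
          rewrite Rabs_left by lra. f_equal. ring. }
        apply L2; lra.
      * replace (- a + (v + e)) with ((- b + (v + e)) + (b - a)) by ring.
        assert (S := Rpower_subadd (- b + (v + e)) (b - a) q ltac:(lra) ltac:(lra) ltac:(lra)).
        apply Rmult_le_reg_r with q. lra. field_simplify; try lra.
    + exists (Rplus ((Rpower (- a + (v + e)) q - Rpower (- v + (v + e)) q) / q)
                   ((Rpower (b + (e - v)) q - Rpower (v + (e - v)) q) / q)). split.
      * apply (is_RInt_Chasles (V:=R_NormedModule)) with v.
        -- apply is_RInt_ext with (fun u => Rpower (- u + (v + e)) (q - 1)).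
           { intros x Hx. rewrite Rmin_left in Hx by lra. rewrite Rmax_right in Hx by lra.
             rewrite Rabs_left by lra. f_equal. ring. }
           apply L2; lra.
        -- apply is_RInt_ext with (fun u => Rpower (u + (e - v)) (q - 1)).
           { intros x Hx. rewrite Rmin_left in Hx by lra. rewrite Rmax_right in Hx by lra.
             rewrite Rabs_right by lra. f_equal. ring. }
           apply L1; lra.
      * 
        replace (- a + (v + e)) with ((- v + (v + e)) + (v - a)) by ring.
        replace (b + (e - v)) with ((v + (e - v)) + (b - v)) by ring.
        assert (S1 := Rpower_subadd (- v + (v + e)) (v - a) q ltac:(lra) ltac:(lra) ltac:(lra)).
        assert (S2 := Rpower_subadd (v + (e - v)) (b - v) q ltac:(lra) ltac:(lra) ltac:(lra)).
        assert (M1 : Rpower (v - a) q <= Rpower (b - a) q) by (apply Rle_Rpower_l; lra).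
        assert (M2 : Rpower (b - v) q <= Rpower (b - a) q) by (apply Rle_Rpower_l; lra).
        apply Rmult_le_reg_r with q. lra. field_simplify; try lra.
Qed.

Definition Kc (H : R) := H * (2 * H - 1) * Rpower (/ 2) (2 * H - 2) * 2 / (2 * H - 1).

Lemma phi_trunc_le (H : R) (n : nat) (y : R) : 1/2 < H < 1 ->
  phi_trunc H n y <= H * (2 * H - 1) * Rpower (/ 2) (2 * H - 2) *
     Rpower (Rabs y + / INR (S n)) ((2 * H - 1) - 1).
Proof.
  intros HH. unfold phi_trunc.
  assert (He : 0 < / INR (S n)) by (apply Rinv_0_lt_compat, lt_0_INR; lia).
  replace ((2 * H - 1) - 1) with (2 * H - 2) by ring.
  rewrite (Rmult_assoc (H * (2 * H - 1)) (Rpower (/ 2) _)). apply Rmult_le_compat_l. nra.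
  rewrite Rpower_mult_distr; try lra.
  2:{ assert (0 <= Rabs y) by apply Rabs_pos. lra. }
  apply Rpower_decr_base. lra.
  assert (0 <= Rabs y) by apply Rabs_pos.
  assert (Rabs y <= Rmax (Rabs y) (/ INR (S n))) by apply Rmax_l.
  assert (/ INR (S n) <= Rmax (Rabs y) (/ INR (S n))) by apply Rmax_r.
  lra.
Qed.

Lemma inner_bound (H : R) (n : nat) (v a b F : R) : 1/2 < H < 1 -> a < b ->
  RInt_is (fun u => phi_trunc H n (u - v)) a b F ->
  F <= Kc H * Rpower (b - a) (2 * H - 1).
Proof.
  intros HH Hab [pr Hpr].
  assert (He : 0 < / INR (S n)) by (apply Rinv_0_lt_compat, lt_0_INR; lia).
  destruct (g_int v (/ INR (S n)) (2 * H - 1) a b He ltac:(lra) Hab) as [val [Hi Hv]].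
  set (K0 := H * (2 * H - 1) * Rpower (/ 2) (2 * H - 2)).
  assert (HK0 : 0 < K0) by (unfold K0; apply Rmult_lt_0_compat; [apply Rmult_lt_0_compat; lra | apply Rpower_pos]).
  assert (Hi2 : is_RInt (fun y => K0 * Rpower (Rabs (y - v) + / INR (S n)) (2 * H - 1 - 1)) a b (K0 * val))
    by exact (is_RInt_scal _ _ _ K0 _ Hi).
  rewrite <- Hpr, <- RInt_Reals.
  apply Rle_trans with (RInt (fun y => K0 * Rpower (Rabs (y - v) + / INR (S n)) (2 * H - 1 - 1)) a b).
  - apply RInt_le. lra. apply ex_RInt_Reals_1; auto. eexists; eauto.
    intros x Hx. apply phi_trunc_le; auto.
  - rewrite (is_RInt_unique _ _ _ _ Hi2).
    unfold Kc. fold K0.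
    apply Rle_trans with (K0 * (2 * Rpower (b - a) (2 * H - 1) / (2 * H - 1))).
    apply Rmult_le_compat_l; lra. right; field; lra.
Qed.

Lemma cv_le_const (J : nat -> R) (I B : R) : Un_cv J I -> (forall n, J n <= B) -> I <= B.
Proof.
  intros Hc Hb. destruct (Rle_lt_dec I B) as [h|h]; auto.
  destruct (Hc (I - B)) as [N HN]. lra.
  specialize (HN N (le_n N)). specialize (Hb N). unfold Rdist in HN.
  apply Rabs_def2 in HN. lra.
Qed.

Lemma dbl_bound (H a b c d I : R) : 1/2 < H < 1 -> a < b -> c < d ->
  dbl_int_phi H a b c d I -> I <= Kc H * Rpower (b - a) (2 * H - 1) * (d - c).
Proof.
  intros HH Hab Hcd [J [HJ HF]].
  apply cv_le_const with J; auto.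
  intros n. destruct (HF n) as [F [HF1 [pr Hpr]]].
  rewrite <- Hpr, <- RInt_Reals.
  apply Rle_trans with (RInt (fun _ => Kc H * Rpower (b - a) (2 * H - 1)) c d).
  - apply RInt_le. lra. apply ex_RInt_Reals_1; auto. apply ex_RInt_const.
    intros x Hx. apply (inner_bound H n x a b); auto.
  - rewrite RInt_const. change (scal (d - c) (Kc H * Rpower (b - a) (2 * H - 1))) with
      ((d - c) * (Kc H * Rpower (b - a) (2 * H - 1))). right; ring.
Qed.

Lemma sumR_ext (n : nat) (f g : nat -> R) : (forall k, (k < n)%nat -> f k = g k) -> sumR n f = sumR n g.
Proof. induction n; simpl; intros H; auto. rewrite IHn by (intros; apply H; lia). rewrite H by lia. auto. Qed.

Lemma sumR_le (n : nat) (f g : nat -> R) : (forall k, (k < n)%nat -> f k <= g k) -> sumR n f <= sumR n g.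
Proof. induction n; simpl; intros H. lra. assert (sumR n f <= sumR n g) by (apply IHn; intros; apply H; lia). assert (f n <= g n) by (apply H; lia). lra. Qed.

Lemma sumR_nonneg (n : nat) (f : nat -> R) : (forall k, (k < n)%nat -> 0 <= f k) -> 0 <= sumR n f.
Proof. intros H. replace 0 with (sumR n (fun _ => 0)). apply sumR_le; auto. induction n; simpl; auto. rewrite IHn; auto; ring. Qed.

Lemma sumR_scal (n : nat) (B : R) (f : nat -> R) : sumR n (fun k => B * f k) = B * sumR n f.
Proof. induction n; simpl. ring. rewrite IHn; ring. Qed.

Lemma sumR_plus (n : nat) (f g : nat -> R) : sumR n (fun k => f k + g k) = sumR n f + sumR n g.
Proof. induction n; simpl. ring. rewrite IHn; ring. Qed.

Lemma sumR_swap (n m : nat) (f : nat -> nat -> R) :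
  sumR n (fun i => sumR m (fun k => f i k)) = sumR m (fun k => sumR n (fun i => f i k)).
Proof.
  induction n; simpl. induction m; simpl; auto. rewrite <- IHm; ring.
  rewrite IHn. rewrite <- sumR_plus. auto.
Qed.

Lemma sumR_neg_swap (n : nat) (a b : nat -> R) : sumR n (fun k => a k - b k) = - sumR n (fun k => b k - a k).
Proof. induction n; simpl. ring. rewrite IHn. ring. Qed.

Lemma sumR_minus (n : nat) (a b : nat -> R) : sumR n (fun k => a k - b k) = sumR n a - sumR n b.
Proof. induction n; simpl. ring. rewrite IHn. ring. Qed.

Lemma sumR_shift (n : nat) (g : nat -> R) : sumR (S n) g = g 0%nat + sumR n (fun k => g (S k)).
Proof. induction n; simpl in *. ring. rewrite IHn. ring. Qed.

Lemma sumR_rev (m : nat) (f : nat -> R) : sumR m (fun i => f (m - i)%nat) = sumR m (fun k => f (S k)).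
Proof.
  induction m. auto.
  rewrite sumR_shift. simpl (S m - 0)%nat. simpl sumR at 2.
  rewrite <- IHm. ring_simplify. f_equal.
Qed.

Lemma geom (x : R) (m : nat) : x <> 1 -> sumR m (fun k => x ^ S k) = (x - x ^ S m) / (1 - x).
Proof.
  intros Hx. induction m. simpl. field. lra.
  assert (E : sumR (S m) (fun k => x ^ S k) = sumR m (fun k => x ^ S k) + x ^ S m) by reflexivity.
  rewrite E, IHm. simpl. field. lra.
Qed.

Lemma exp_pow_INR (n : nat) (x : R) : exp (INR n * x) = exp x ^ n.
Proof.
  induction n. simpl. rewrite Rmult_0_l. apply exp_0.
  rewrite S_INR. simpl. rewrite <- IHn, <- exp_plus. f_equal. ring.
Qed.

Lemma scalar_main (tau lam beta : R) (m : nat) : 0 < tau -> 0 < lam -> -2 <= beta - 1 <= 0 ->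
  (forall i, (i < m)%nat -> exp (- (INR m * tau - INR i * tau) * lam) - (/ (1 + tau * lam)) ^ (m - i) <= 0) /\
  (sumR m (fun i => exp (- (INR m * tau - INR i * tau) * lam) - (/ (1 + tau * lam)) ^ (m - i))) ^ 2
    <= Rpower (tau * lam) (beta - 1).
Proof.
  intros Ht Hl Hb.
  set (z := tau * lam). assert (Hz : 0 < z) by (unfold z; nra).
  set (s := exp (- z)). set (r := / (1 + z)).
  assert (Hs0 : 0 < s) by apply exp_pos.
  assert (Hr0 : 0 < r) by (apply Rinv_0_lt_compat; lra).
  assert (Hsr : s <= r).
  { unfold s, r. assert (E : 1 + z <= exp z) by apply exp_ineq1_le.
    rewrite exp_Ropp. apply Rinv_le_contravar; lra. }
  assert (Hr1 : r < 1). { unfold r. rewrite <- Rinv_1. apply Rinv_lt_contravar; lra. }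
  assert (Hs1 : 1 - z <= s). { unfold s. assert (E := exp_ineq1_le (- z)). lra. }
  assert (Eterm : forall i, (i < m)%nat ->
     exp (- (INR m * tau - INR i * tau) * lam) - (/ (1 + tau * lam)) ^ (m - i) = s ^ (m - i) - r ^ (m - i)).
  { intros i Hi. unfold s, r, z. rewrite <- exp_pow_INR. rewrite minus_INR by lia. f_equal. f_equal. ring. }
  split.
  { intros i Hi. rewrite Eterm by auto. assert (s ^ (m - i) <= r ^ (m - i)) by (apply pow_incr; lra). lra. }
  replace (sumR m (fun i => exp (- (INR m * tau - INR i * tau) * lam) - r ^ (m - i)))
    with (sumR m (fun k => s ^ S k - r ^ S k)).
  2:{ rewrite <- (sumR_rev m (fun n => s ^ n - r ^ n)). apply sumR_ext. intros; symmetry; apply Eterm; auto. }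
  set (D := sumR m (fun k => r ^ S k - s ^ S k)).
  assert (ED : sumR m (fun k => s ^ S k - r ^ S k) = - D).
  { unfold D. apply sumR_neg_swap. }
  rewrite ED.
  assert (HD0 : 0 <= D). { unfold D. apply sumR_nonneg. intros. assert (s ^ S k <= r ^ S k) by (apply pow_incr; lra). lra. }
  assert (HD1 : D <= r / (1 - r) - s / (1 - s)).
  { assert (E : D = sumR m (fun k => r ^ S k) - sumR m (fun k => s ^ S k)).
    { unfold D. apply sumR_minus. }
    rewrite E, !geom by lra.
    assert (s ^ S m <= r ^ S m) by (apply pow_incr; lra).
    assert (0 <= s ^ S m) by (apply pow_le; lra).
    assert (s ^ S m / (1 - s) <= r ^ S m / (1 - r)).
    { unfold Rdiv. apply Rmult_le_compat; try lra. left; apply Rinv_0_lt_compat; lra.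
      apply Rinv_le_contravar; lra. }
    unfold Rdiv in *. lra. }
  assert (Er : r / (1 - r) = / z). { unfold r. field. split; lra. }
  rewrite Er in HD1.
  assert (Hsp : 0 <= s / (1 - s)) by (apply Rmult_le_pos; [lra| left; apply Rinv_0_lt_compat; lra]).
  destruct (Rle_lt_dec z 1) as [Hz1|Hz1].
  - assert (D <= 1).
    { apply Rle_trans with (/ z - s / (1 - s)); auto.
      apply Rmult_le_reg_r with (z * (1 - s)). apply Rmult_lt_0_compat; lra.
      field_simplify; try lra. }
    assert (1 <= Rpower z (beta - 1)).
    { unfold Rpower. rewrite <- exp_0 at 1. apply exp_le.
      assert (ln z <= 0) by (rewrite <- ln_1; apply ln_le; lra). replace ((beta - 1) * ln z) with ((1 - beta) * (- ln z)) by ring. apply Rmult_le_pos; lra. }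
    nra.
  - assert (D <= / z) by lra.
    assert (Hz2 : (- D) ^ 2 <= / z ^ 2).
    { rewrite <- pow_inv. replace ((- D) ^ 2) with (D ^ 2) by ring.
      apply pow_incr; split; lra. }
    apply Rle_trans with (Rpower z (Ropp 2)).
    { rewrite Rpower_Ropp. replace 2 with (INR 2) by (simpl; ring). rewrite Rpower_pow by lra. exact Hz2. }
    apply Rle_Rpower; lra.
Qed.

Section HS.
Variable V : HilbertSpace.

Lemma hinner_zero_l (y : V) : hinner hzero y = 0.
Proof.
  assert (E := hinner_add V hzero hzero y). rewrite hadd_zero in E. lra.
Qed.

Lemma hinner_opp_l (x y : V) : hinner (hopp x) y = - hinner x y.
Proof.
  assert (E := hinner_add V x (hopp x) y). rewrite hadd_opp, hinner_zero_l in E. lra.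
Qed.

Lemma hinner_vsum_l (n : nat) (f : nat -> V) (y : V) :
  hinner (vsum n f) y = sumR n (fun k => hinner (f k) y).
Proof. induction n; simpl. apply hinner_zero_l. rewrite hinner_add, IHn. auto. Qed.

Lemma vsum_ext (n : nat) (f g : nat -> V) : (forall k, (k < n)%nat -> f k = g k) -> vsum n f = vsum n g.
Proof. induction n; simpl; intros H; auto. rewrite IHn by (intros; apply H; lia). rewrite H by lia. auto. Qed.

Lemma sumR_delta (n k : nat) (b : nat -> R) : (k < n)%nat ->
  sumR n (fun l => b l * (if Nat.eq_dec l k then 1 else 0)) = b k.
Proof.
  induction n; intros Hk. lia. simpl.
  destruct (Nat.eq_dec n k).
  - subst. rewrite (sumR_ext _ _ (fun _ => 0)).
    + assert (sumR k (fun _ => 0) = 0) by (clear; induction k; simpl; auto; rewrite IHk; ring). lra.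
    + intros l Hl. destruct (Nat.eq_dec l k); [lia| ring].
  - rewrite IHn by lia. ring.
Qed.

Lemma inner_expand (e : nat -> V) (N : nat) (a b : nat -> R) :
  (forall k l, hinner (e k) (e l) = if Nat.eq_dec k l then 1 else 0) ->
  hinner (vsum N (fun k => hscal (a k) (e k))) (vsum N (fun l => hscal (b l) (e l)))
  = sumR N (fun k => a k * b k).
Proof.
  intros Hon. rewrite hinner_vsum_l. apply sumR_ext. intros k Hk.
  rewrite hinner_scal. f_equal.
  rewrite hinner_sym, hinner_vsum_l.
  rewrite (sumR_ext _ _ (fun l => b l * (if Nat.eq_dec l k then 1 else 0))).
  apply sumR_delta; auto.
  intros l Hl. rewrite hinner_scal, Hon. auto.
Qed.

Lemma inner_funcalc (e : nat -> V) lam N (g h : R -> R) (y : V) :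
  (forall k l, hinner (e k) (e l) = if Nat.eq_dec k l then 1 else 0) ->
  hinner (funcalc e lam N g y) (funcalc e lam N h y)
  = sumR N (fun k => g (lam k) * h (lam k) * (hinner y (e k)) ^ 2).
Proof.
  intros Hon. unfold funcalc. rewrite inner_expand by auto.
  apply sumR_ext; intros; ring.
Qed.

Lemma hinner_hsub (x y z w : V) :
  hinner (hsub x y) (hsub z w) = hinner x z - hinner x w - hinner y z + hinner y w.
Proof.
  unfold hsub. rewrite !hinner_add, !hinner_opp_l.
  rewrite (hinner_sym V x (hadd z (hopp w))), (hinner_sym V y (hadd z (hopp w))).
  rewrite !hinner_add, !hinner_opp_l.
  rewrite (hinner_sym V z x), (hinner_sym V w x), (hinner_sym V z y), (hinner_sym V w y). ring.
Qed.

End HS.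

Lemma sumR_4 (n : nat) (a b c d w : nat -> R) :
  sumR n (fun k => a k * c k * w k) - sumR n (fun k => a k * d k * w k)
  - sumR n (fun k => b k * c k * w k) + sumR n (fun k => b k * d k * w k)
  = sumR n (fun k => (a k - b k) * (c k - d k) * w k).
Proof. induction n; simpl. ring. rewrite <- IHn. ring. Qed.

Lemma TN_inner (V : HilbertSpace) (e : nat -> V) lam N tau m i j (y : V) :
  (forall k l, hinner (e k) (e l) = if Nat.eq_dec k l then 1 else 0) ->
  hinner (TN e lam N tau m i y) (TN e lam N tau m j y) =
  sumR N (fun k => (exp (- (INR m * tau - INR i * tau) * lam k) - (/ (1 + tau * lam k)) ^ (m - i))
                 * (exp (- (INR m * tau - INR j * tau) * lam k) - (/ (1 + tau * lam k)) ^ (m - j))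
                 * (hinner y (e k)) ^ 2).
Proof.
  intros Hon. unfold TN, EN, RNpow. rewrite hinner_hsub, !inner_funcalc by auto.
  apply sumR_4.
Qed.

Theorem mainTheorem11 :
  forall (H beta T : R), 1/2 < H < 1 -> 1 - 2 * H < beta <= 1 -> 0 < T ->
  forall (V : HilbertSpace) (e : nat -> V) (lam : nat -> R),
    (* (e_k) orthonormal basis of V *)
    (forall k l, hinner (e k) (e l) = if Nat.eq_dec k l then 1 else 0) ->
    (forall x : V, forall eps, eps > 0 -> exists n0, forall N, (N >= n0)%nat ->
        hnorm (hsub x (PN e N x)) < eps) ->
    (* eigenvalues 0 < lambda_1 <= lambda_2 <= ... -> infinity *)
    0 < lam 0%nat ->
    (forall k, lam k <= lam (S k)) ->
    (forall K, exists n0, forall n, (n >= n0)%nat -> lam n > K) ->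
  exists C : R,
    forall (N M m : nat) (x : V),
      (1 <= M)%nat -> (1 <= m <= M)%nat ->
      let tau := T / INR M in
      forall I : nat -> nat -> R,
        (forall i j, dbl_int_phi H (INR i * tau) (INR (S i) * tau)
                                   (INR j * tau) (INR (S j) * tau) (I i j)) ->
        sumR m (fun i => sumR m (fun j =>
          hinner (TN e lam N tau m i (PN e N x)) (TN e lam N tau m j (PN e N x))
          * I i j))
        <= C * Rpower tau (2 * H + beta - 1)
             * (hnorm (ANpow e lam N ((beta - 1) / 2) (PN e N x))) ^ 2.
Proof.
  intros H beta T HH Hb HT V e lam Hon _ Hl0 Hlm _.
  exists (Kc H).
  intros N M m x HM Hm tau I HI.
  set (y := PN e N x).
  assert (Htau : 0 < tau).
  { unfold tau. apply Rdiv_lt_0_compat; auto. apply lt_0_INR; lia. }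
  assert (Hlam : forall k, 0 < lam k).
  { induction k. auto. specialize (Hlm k). lra. }
  set (B := Kc H * Rpower tau (2 * H - 1) * tau).
  assert (HIb : forall i j, I i j <= B).
  { intros i j. unfold B.
    assert (E1 : INR (S i) * tau - INR i * tau = tau) by (rewrite S_INR; ring).
    assert (E2 : INR (S j) * tau - INR j * tau = tau) by (rewrite S_INR; ring).
    assert (Hd := dbl_bound H (INR i * tau) (INR (S i) * tau) (INR j * tau) (INR (S j) * tau) (I i j) HH ltac:(lra) ltac:(lra) (HI i j)).
    rewrite E1, E2 in Hd. exact Hd. }
  set (c := fun k i => exp (- (INR m * tau - INR i * tau) * lam k) - (/ (1 + tau * lam k)) ^ (m - i)).
  set (w := fun k => (hinner y (e k)) ^ 2).
  assert (Hsc : forall k, (forall i, (i < m)%nat -> c k i <= 0) /\ (sumR m (c k)) ^ 2 <= Rpower (tau * lam k) (beta - 1)).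
  { intros k. apply scalar_main; auto; lra. }
  assert (Hw : forall k, 0 <= w k) by (intros k; unfold w; apply pow2_ge_0).
  assert (HB : 0 <= B).
  { unfold B, Kc. assert (P := Rpower_pos (/2) (2 * H - 2)). assert (P2 := Rpower_pos tau (2 * H - 1)).
    apply Rmult_le_pos; [|lra]. apply Rmult_le_pos; [|lra].
    unfold Rdiv. apply Rmult_le_pos. apply Rmult_le_pos. apply Rmult_le_pos. apply Rmult_le_pos; lra. lra. lra.
    left; apply Rinv_0_lt_compat; lra. }
  apply Rle_trans with (sumR m (fun i => sumR m (fun j => sumR N (fun k => c k i * c k j * w k) * B))).
  { apply sumR_le; intros i Hi. apply sumR_le; intros j Hj.
    rewrite TN_inner by auto. fold y.
    apply Rmult_le_compat_l; auto.
    apply sumR_nonneg. intros k Hk.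
    destruct (Hsc k) as [Hc _]. specialize (Hc i Hi) as Hci. specialize (Hc j Hj).
    apply Rmult_le_pos; auto. unfold c in *. nra. }
  replace (sumR m (fun i => sumR m (fun j => sumR N (fun k => c k i * c k j * w k) * B)))
    with (sumR N (fun k => B * w k * (sumR m (c k)) ^ 2)).
  2:{ rewrite (sumR_ext m _ (fun i => sumR N (fun k => sumR m (fun j => B * w k * c k i * c k j)))).
      - rewrite sumR_swap. apply sumR_ext. intros k Hk.
        symmetry. transitivity (sumR m (fun i => (B * w k * sumR m (c k)) * c k i)).
        + apply sumR_ext; intros i Hi.
          transitivity (sumR m (fun j => (B * w k * c k i) * c k j)).
          apply sumR_ext; intros; ring.
          rewrite sumR_scal. ring.
        + rewrite sumR_scal. ring.
      - intros i Hi. rewrite sumR_swap. apply sumR_ext. intros j Hj.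
        rewrite Rmult_comm, <- sumR_scal. apply sumR_ext; intros; ring. }
  apply Rle_trans with (sumR N (fun k => B * w k * Rpower (tau * lam k) (beta - 1))).
  { apply sumR_le; intros k Hk. apply Rmult_le_compat_l. apply Rmult_le_pos; auto.
    apply (Hsc k). }
  unfold hnorm. rewrite pow2_sqrt by apply hinner_pos.
  unfold ANpow. rewrite inner_funcalc by auto. fold y.
  rewrite <- sumR_scal. right. apply sumR_ext. intros k Hk.
  unfold B, w.
  assert (Hlk := Hlam k).
  rewrite <- Rpower_mult_distr by auto.
  rewrite <- Rpower_plus.
  replace ((beta - 1) / 2 + (beta - 1) / 2) with (beta - 1) by field.
  replace (2 * H + beta - 1) with ((2 * H - 1) + 1 + (beta - 1)) by ring.
  rewrite !Rpower_plus, Rpower_1 by auto. ring.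
Qed.
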